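(* Let $D\in\{D_1,D_2,\dots,D_8\}$. For every positive integer $v$ with $v\equiv 0\pmod{14}$, there exists a $D$-decomposition of $K^*_v$.
   Context: $K^*_v$ denotes the complete symmetric digraph of order $v$: it contains both arcs $(x,y)$ and $(y,x)$ for every pair of distinct vertices $x,y$. A $D$-decomposition of a digraph $K$ is a set of subdigraphs of $K$, each isomorphic to $D$, such that every arc of $K$ lies in exactly one of them. For distinct vertices $v_0,\dots,v_6$, the digraphs $D_i[v_0,v_1,\dots,v_6]$ ($i\in[1,8]$) all have vertex set $\{v_0,\dots,v_6\}$ and the following arc sets: $D_1$: $(v_1,v_0),(v_1,v_2),(v_2,v_3),(v_3,v_4),(v_4,v_5),(v_5,v_6),(v_6,v_0)$; $D_2$: $(v_1,v_0),(v_2,v_1),(v_2,v_3),(v_3,v_4),(v_4,v_5),(v_5,v_6),(v_6,v_0)$; $D_3$: $(v_1,v_0),(v_1,v_2),(v_3,v_2),(v_3,v_4),(v_4,v_5),(v_5,v_6),(v_6,v_0)$; $D_4$: $(v_1,v_0),(v_1,v_2),(v_2,v_3),(v_4,v_3),(v_4,v_5),(v_5,v_6),(v_6,v_0)$; $D_5$: $(v_1,v_0),(v_2,v_1),(v_3,v_2),(v_3,v_4),(v_4,v_5),(v_5,v_6),(v_6,v_0)$; $D_6$: $(v_1,v_0),(v_2,v_1),(v_2,v_3),(v_3,v_4),(v_5,v_4),(v_5,v_6),(v_6,v_0)$; $D_7$: $(v_1,v_0),(v_1,v_2),(v_3,v_2),(v_3,v_4),(v_4,v_5),(v_6,v_5),(v_6,v_0)$;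 $D_8$: $(v_1,v_0),(v_2,v_1),(v_2,v_3),(v_4,v_3),(v_4,v_5),(v_5,v_6),(v_6,v_0)$. $D_i$ also denotes the isomorphism type of $D_i[v_0,\dots,v_6]$. *)

(* Defs.v *)
From mathcomp Require Import all_boot.
Set Implicit Arguments. Unset Strict Implicit. Unset Printing Implicit Defensive.

(* Arc lists of D_1..D_8 on vertices v_0..v_6 (indices 0..6); (a,b) = arc (v_a,v_b). *)
Definition Darcs (i : nat) : seq (nat * nat) :=
  match i with
  | 1 => [:: (1,0); (1,2); (2,3); (3,4); (4,5); (5,6); (6,0)]
  | 2 => [:: (1,0); (2,1); (2,3); (3,4); (4,5); (5,6); (6,0)]
  | 3 => [:: (1,0); (1,2); (3,2); (3,4); (4,5); (5,6); (6,0)]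
  | 4 => [:: (1,0); (1,2); (2,3); (4,3); (4,5); (5,6); (6,0)]
  | 5 => [:: (1,0); (2,1); (3,2); (3,4); (4,5); (5,6); (6,0)]
  | 6 => [:: (1,0); (2,1); (2,3); (3,4); (5,4); (5,6); (6,0)]
  | 7 => [:: (1,0); (1,2); (3,2); (3,4); (4,5); (6,5); (6,0)]
  | 8 => [:: (1,0); (2,1); (2,3); (4,3); (4,5); (5,6); (6,0)]
  | _ => [::]
  end.

(* The copy D_i[f 0, ..., f 6] of D_i in K*_v (vertex set 'I_v), given by
   a labelling f of v_0..v_6 by vertices of K*_v; its arc list. *)
Definition copy_arcs (v i : nat) (f : {ffun 'I_7 -> 'I_v}) : seq ('I_v * 'I_v) :=
  [seq (f (inord a.1), f (inord a.2)) | a <- Darcs i].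

(* A D_i-decomposition of K*_v: a list of copies D_i[f 0,...,f 6] with
   distinct vertices (f injective) such that every arc (x,y), x <> y, of K*_v
   lies in exactly one copy of the list (this also forces the copies to be
   pairwise distinct, so the list represents a set). *)
Definition is_Ddecomposition (v i : nat) (B : seq {ffun 'I_7 -> 'I_v}) : Prop :=
  all (fun f : {ffun 'I_7 -> 'I_v} => injectiveb (fun k => f k)) B /\
  forall x y : 'I_v, x != y -> count (fun f => (x, y) \in copy_arcs i f) B = 1.

(* Main.v *)
Require Import Defs.
From mathcomp Require Import all_boot.
From mathcomp Require Import zify.

Set Implicit Arguments. Unset Strict Implicit. Unset Printing Implicit Defensive.

Definition tr (n : nat) (o : option nat) (t : nat) : 'I_n.+1 :=
  match o with None => inord n | Some p => inord ((p + t) %% n) end.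

Definition cpy (n : nat) (b : seq (option nat)) (t : nat) : {ffun 'I_7 -> 'I_n.+1} :=
  [ffun j : 'I_7 => tr n (nth None b j) t].

Definition devB (n : nat) (bases : seq (seq (option nat))) :=
  flatten [seq [seq cpy n b t | t <- iota 0 n] | b <- bases].

Lemma sum_eq1 (T : finType) (P : pred T) (c : T -> nat) :
  \sum_(p | P p) c p = \sum_(p | P p) 1 -> (forall p, P p -> 0 < c p) ->
  forall p, P p -> c p = 1.
Proof.
move=> Hs Hpos p Pp.
rewrite (bigD1 p) //= [X in _ = X](bigD1 p) //= in Hs.
have L : \sum_(q | P q && (q != p)) 1 <= \sum_(q | P q && (q != p)) c q.
  by apply: leq_sum => q /andP[Pq _]; exact: Hpos.
have := Hpos p Pp. lia.
Qed.

Lemma size_devB n bases : size (devB n bases) = size bases * n.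
Proof.
rewrite /devB; elim: bases => //= b bs IH.
by rewrite size_cat size_map size_iota IH mulSn.
Qed.

Lemma card_offdiag n : \sum_(p : 'I_n.+1 * 'I_n.+1 | p.1 != p.2) 1 = n.+1 * n.
Proof.
rewrite -(pair_big_dep xpredT (fun x y => x != y) (fun _ _ => 1)) /=.
rewrite (eq_bigr (fun _ => n)) ?sum_nat_const ?card_ord //.
move=> x _. rewrite sum1_card.
have -> : #|(fun y : 'I_n.+1 => x != y)| = #|predC1 x|.
  by apply: eq_card => y; rewrite !inE eq_sym.
by rewrite cardC1 card_ord.
Qed.

Lemma develop (i n : nat) (bases : seq (seq (option nat))) :
  0 < n ->
  uniq (Darcs i) -> all (fun a => [&& a.1 < 7, a.2 < 7 & a.1 != a.2]) (Darcs i) ->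
  size (Darcs i) = 7 ->
  (forall b t, b \in bases -> injectiveb (fun k => cpy n b t k)) ->
  7 * size bases = n.+1 ->
  (forall x y : 'I_n.+1, x != y -> exists b t a, [/\ b \in bases, t < n, a \in Darcs i,
        tr n (nth None b a.1) t = x & tr n (nth None b a.2) t = y]) ->
  exists B : seq {ffun 'I_7 -> 'I_n.+1}, is_Ddecomposition i B.
Proof.
move=> n0 Du Dall Dsz Hinj Hsz Hcov.
have memB b t : b \in bases -> t < n -> cpy n b t \in devB n bases.
  move=> Hb Ht; apply/flattenP; exists [seq cpy n b t | t <- iota 0 n]; first exact: map_f.
  by apply: map_f; rewrite mem_iota.
have injB f : f \in devB n bases -> injective (fun k => f k).
  by case/flattenP=> s /mapP[b Hb ->] /mapP[t _ ->]; apply/injectiveP; exact: Hinj.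
exists (devB n bases); split.
  by apply/allP=> f Hf; apply/injectiveP; exact: injB.
move/allP: Dall => Dall.
pose c (p : 'I_n.+1 * 'I_n.+1) := count (fun f => p \in copy_arcs i f) (devB n bases).
have arcs_uniq f : f \in devB n bases -> uniq (copy_arcs i f).
  move=> Hf; rewrite map_inj_in_uniq // => a1 a2 H1 H2 [] /(injB f Hf) E1 /(injB f Hf) E2.
  case/and3P: (Dall a1 H1) => h1 h2 _; case/and3P: (Dall a2 H2) => h3 h4 _.
  move: E1 E2 => /(congr1 (@nat_of_ord _)) E1 /(congr1 (@nat_of_ord _)) E2.
  rewrite !inordK // in E1 E2.
  by case: a1 a2 {H1 H2 h1 h2 h3 h4} E1 E2 => [u1 w1] [u2 w2] /= -> ->.
have noloop f p : f \in devB n bases -> p \in copy_arcs i f -> p.1 != p.2.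
  move=> Hf /mapP[a Ha ->] /=; apply/negP => /eqP/(injB f Hf)/(congr1 (@nat_of_ord _)).
  case/and3P: (Dall a Ha) => h1 h2 h3.
  by rewrite !inordK //; apply/eqP.
have S1 : \sum_(p | p.1 != p.2) c p = \sum_p c p.
  rewrite [in RHS](bigID (fun p : _ * _ => p.1 != p.2)) /= [X in _ = _ + X]big1 ?addn0 //.
  move=> p /negPn Hp; rewrite /c; apply/eqP; rewrite -leqn0 leqNgt -has_count.
  apply/hasP => [[f Hf Hpf]]. by move: (noloop f p Hf Hpf); rewrite Hp.
have S2 : \sum_p c p = \sum_(f <- devB n bases) 7.
  rewrite /c. under eq_bigr => p _ do rewrite -sum1_count big_mkcond.
  rewrite exchange_big /= [LHS]big_seq [RHS]big_seq. apply: eq_bigr => f Hf.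
  rewrite -big_mkcond /= sum1_card (card_uniqP (arcs_uniq f Hf)) size_map Dsz.
  by [].
have Hsum : \sum_(p | p.1 != p.2) c p = \sum_(p : 'I_n.+1 * 'I_n.+1 | p.1 != p.2) 1.
  rewrite S1 S2 card_offdiag big_const_seq count_predT iter_addn_0 size_devB.
  rewrite -Hsz. lia.
move=> x y Hxy.
suff Hp : forall p : 'I_n.+1 * 'I_n.+1, p.1 != p.2 -> 0 < c p by exact: (@sum_eq1 _ _ c Hsum Hp (x,y) Hxy).
move=> [x' y'] /= Hp.
have [b [t [a [Hb Ht Ha Ex Ey]]]] := Hcov x' y' Hp.
rewrite /c -has_count; apply/hasP; exists (cpy n b t); first exact: memB.
case/and3P: (Dall a Ha) => h1 h2 _.
apply/mapP; exists a => //.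
by rewrite !ffunE !inordK // Ex Ey.
Qed.

Lemma tr_hit n p x : 0 < n -> x < n -> (p + (x + (n - p %% n)) %% n) %% n = x.
Proof.
move=> n0 xn; rewrite modnDmr.
have -> : p + (x + (n - p %% n)) = (p %/ n).+1 * n + x.
  rewrite {1}(divn_eq p n); have := ltn_pmod p n0; move: (p %/ n) (p %% n) => a b hb.
  rewrite mulSn; lia.
by rewrite modnMDl modn_small.
Qed.

Lemma add_d n x y : 0 < n -> x < n -> y < n -> (x + (y + n - x) %% n) %% n = y.
Proof.
move=> n0 xn yn; rewrite modnDmr.
have -> : x + (y + n - x) = y + n by lia.
by rewrite modnDr modn_small.
Qed.

Lemma tr_hit2 n p q x y t : 0 < n -> x < n -> y < n ->
  let d := (y + n - x) %% n in (q = p + d \/ p = q + (n - d)) ->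
  (p + t) %% n = x -> (q + t) %% n = y.
Proof.
move=> n0 xn yn d [->|->] E.
  by rewrite addnAC -modnDml E add_d.
have dn : d < n by rewrite /d ltn_pmod.
rewrite -(modnDr (q + t) n).
have -> : q + t + n = q + (n - d) + t + d by lia.
by rewrite -modnDml E add_d.
Qed.

Lemma d_range n x y : x < n -> y < n -> x != y -> 0 < (y + n - x) %% n.
Proof.
move=> xn yn xy; case: (leqP x y) => h.
  have -> : y + n - x = (y - x) + n by lia.
  rewrite modnDr modn_small; lia.
rewrite modn_small; lia.
Qed.

Definition bounded (hi : nat) (b : seq (option nat)) :=
  all (fun o => if o is Some p then p <= hi else true) b.

Lemma cpy_inj n b t hi : size b = 7 -> uniq b -> hi < n -> bounded hi b ->
  injectiveb (fun k => cpy n b t k).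
Proof.
move=> Hs Hu hn /allP Hb; apply/injectiveP => j1 j2; rewrite !ffunE => E.
apply: ord_inj; apply/eqP; rewrite -(nth_uniq None _ _ Hu) ?Hs //.
have l1 : j1 < size b by rewrite Hs.
have l2 : j2 < size b by rewrite Hs.
move: E (Hb _ (mem_nth None l1)) (Hb _ (mem_nth None l2)).
have n00 : 0 < n by apply: leq_ltn_trans hn.
have M z : z %% n < n.+1 by rewrite ltnS ltnW // ltn_pmod.
case: (nth None b j1) => [p|]; case: (nth None b j2) => [q|] //= E h1 h2.
- move/(congr1 (@nat_of_ord _)): E; rewrite !inordK ?M //.
  move/eqP; rewrite eqn_modDr !modn_small => [/eqP->//| |]; exact: leq_ltn_trans hn.
- move/(congr1 (@nat_of_ord _)): E; rewrite !inordK ?M // => E.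
  by have := ltn_pmod (p + t) n00; rewrite E ltnn.
- move/(congr1 (@nat_of_ord _)): E; rewrite !inordK ?M // => E.
  by have := ltn_pmod (q + t) n00; rewrite -E ltnn.
Qed.

Definition gadget (i : nat) : seq (option nat) * seq (option nat) :=
  match i with
  | 1 => ([:: Some 10; Some 12; None; Some 0; Some 1; Some 3; Some 6], [:: Some 3; Some 7; Some 12; Some 11; Some 5; Some 0; Some 6])
  | 2 => ([:: Some 8; None; Some 0; Some 1; Some 3; Some 6; Some 10], [:: Some 1; Some 2; Some 5; Some 10; Some 4; Some 0; Some 6])
  | 3 => ([:: Some 7; Some 3; Some 6; Some 0; None; Some 4; Some 5], [:: Some 0; Some 6; Some 5; Some 7; Some 12; Some 8; Some 3])
  | 4 => ([:: Some 9; Some 3; None; Some 1; Some 0; Some 2; Some 5], [:: Some 0; Some 6; Some 11; Some 10; Some 12; Some 7; Some 3])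
  | 5 => ([:: Some 3; None; Some 1; Some 0; Some 2; Some 5; Some 9], [:: Some 5; Some 0; Some 4; Some 7; Some 6; Some 12; Some 10])
  | 6 => ([:: Some 9; None; Some 1; Some 2; Some 4; Some 0; Some 3], [:: Some 0; Some 1; Some 6; Some 11; Some 5; Some 7; Some 3])
  | 7 => ([:: Some 5; Some 2; Some 6; Some 0; None; Some 4; Some 3], [:: Some 0; Some 1; Some 6; Some 11; Some 5; Some 2; Some 4])
  | 8 => ([:: Some 5; None; Some 1; Some 2; Some 0; Some 3; Some 7], [:: Some 5; Some 0; Some 6; Some 1; Some 4; Some 10; Some 9])
  | _ => ([::], [::])
  end.

Definition stepP (b : seq (option nat)) (a : nat * nat) (e : nat) (dir : bool) :=
  match nth None b a.1, nth None b a.2 with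
  | Some p, Some q => if dir then q == p + e else p == q + e
  | _, _ => false end.

Definition hasstep i (bs : seq (seq (option nat))) e dir :=
  has (fun b => has (fun a => stepP b a e dir) (Darcs i)) bs.

Definition dcheck i :=
  [&& uniq (Darcs i), all (fun a => [&& a.1 < 7, a.2 < 7 & a.1 != a.2]) (Darcs i),
      size (Darcs i) == 7 &
      all (fun j => ((j, j.+1 %% 7) \in Darcs i) || ((j.+1 %% 7, j) \in Darcs i)) (iota 0 7)].

Definition gcheck i :=
  let X := (gadget i).1 in let Y := (gadget i).2 in
  [&& all (fun e => hasstep i [:: X; Y] e true && hasstep i [:: X; Y] e false) (iota 1 6),
      has (fun a => (nth None X a.1 != None) && (nth None X a.2 == None)) (Darcs i),
      has (fun a => (nth None X a.1 == None) && (nth None X a.2 != None)) (Darcs i) &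
      [&& size X == 7, size Y == 7, uniq X, uniq Y, bounded 12 X & bounded 12 Y]].

Lemma checkP i : 1 <= i <= 8 -> dcheck i && gcheck i.
Proof. case/andP; do 9 (case: i => [|i] //). Qed.

Lemma stepP_ex b a e dir : stepP b a e dir ->
  exists p q, [/\ nth None b a.1 = Some p, nth None b a.2 = Some q &
                  (if dir then q = p + e else p = q + e)].
Proof.
rewrite /stepP; case: (nth None b a.1) => [p|] //; case: (nth None b a.2) => [q|] //.
by move=> H; exists p, q; split => //; case: dir H => /eqP.
Qed.

Lemma pair_edge i b1 b2 j J s u w u' w' dir :
  ((j, J) \in Darcs i) || ((J, j) \in Darcs i) ->
  nth None b1 j = Some u -> nth None b1 J = Some w ->
  nth None b2 j = Some u' -> nth None b2 J = Some w' ->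
  (w = u + s /\ u' = w' + s) \/ (u = w + s /\ w' = u' + s) ->
  exists b a, [/\ b \in [:: b1; b2], a \in Darcs i & stepP b a s dir].
Proof.
move=> /orP[H|H] e1 e2 e3 e4 [[E1 E2]|[E1 E2]]; case: dir;
 first [ solve [exists b1, (j, J); split; rewrite ?inE ?eqxx //= /stepP /= ?e1 ?e2; apply/eqP; lia]
       | solve [exists b2, (j, J); split; rewrite ?inE ?eqxx ?orbT //= /stepP /= ?e3 ?e4; apply/eqP; lia]
       | solve [exists b1, (J, j); split; rewrite ?inE ?eqxx //= /stepP /= ?e1 ?e2; apply/eqP; lia]
       | solve [exists b2, (J, j); split; rewrite ?inE ?eqxx ?orbT //= /stepP /= ?e3 ?e4; apply/eqP; lia] ].
Qed.

Definition Cpos (r : nat) : seq (option nat) :=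
  map Some [:: 7*r+4; 14*r+4; 7*r-1; 14*r; 7*r-6; 14*r-4; 0].
Definition Npos (r : nat) : seq (option nat) :=
  map Some [:: 7*r; 0; 7*r+5; 4; 7*r+10; 8; 14*r+4].
Definition steps (r : nat) : seq nat := [:: 7*r; 7*r+5; 7*r+1; 7*r+6; 7*r+2; 14*r-4; 7*r+4].

Lemma row_pos r j : 1 <= r -> j < 7 ->
  exists u w u' w', [/\ nth None (Cpos r) j = Some u, nth None (Cpos r) (j.+1 %% 7) = Some w,
     nth None (Npos r) j = Some u', nth None (Npos r) (j.+1 %% 7) = Some w' &
     let s := nth 0 (steps r) j in (w = u + s /\ u' = w' + s) \/ (u = w + s /\ w' = u' + s)].
Proof.
move=> r1; do 7 (case: j => [|j]; first by move=> _; do 4 eexists; split; try reflexivity; simpl; lia).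
by [].
Qed.

Lemma rowedge i r j dir : 1 <= r -> j < 7 ->
  ((j, j.+1 %% 7) \in Darcs i) || ((j.+1 %% 7, j) \in Darcs i) ->
  exists b a, [/\ b \in [:: Cpos r; Npos r], a \in Darcs i & stepP b a (nth 0 (steps r) j) dir].
Proof.
move=> r1 hj Ho.
have [u [w [u' [w' [e1 e2 e3 e4 H]]]]] := row_pos r1 hj.
exact: pair_edge Ho e1 e2 e3 e4 H.
Qed.

Lemma classify k d : 1 <= k -> 0 < d -> d < 14*k - 1 ->
  d <= 6 \/ 14*k - 1 - d <= 6 \/
  exists r j, [/\ 1 <= r <= k.-1, j < 7 & (nth 0 (steps r) j = d \/ nth 0 (steps r) j = 14*k - 1 - d)].
Proof.
move=> k1 d0 dn.
case: (leqP d 6) => h1; first by left.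
case: (leqP (14*k-1-d) 6) => h2; first by right; left.
right; right.
have [c [Hc1 Hc2]] : exists c, (c = d \/ c = 14*k-1-d) /\ 7 <= c <= 7*k-1.
  case: (leqP d (7*k-1)) => h3; [exists d | exists (14*k-1-d)]; lia.
case: (boolP (c %% 7 == 3)) => Hm.
  case: (boolP ((c %/ 7) %% 2 == 1)) => Ho.
    exists ((c %/ 7).+1 %/ 2), 5; split => /=; lia.
  exists (k - (c %/ 7) %/ 2), 5; split => /=; lia.
have : c %% 7 < 7 by rewrite ltn_pmod.
case Em: (c %% 7) => [|[|[|[|[|[|[|m]]]]]]] _ //; try lia.
- exists (c %/ 7), 0; split => /=; lia.
- exists (c %/ 7), 2; split => /=; lia.
- exists (c %/ 7), 4; split => /=; lia.
- exists (c %/ 7), 6; split => /=; lia.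
- exists (c %/ 7), 1; split => /=; lia.
- exists (c %/ 7), 3; split => /=; lia.
Qed.

Definition rows k := flatten [seq [:: Cpos r; Npos r] | r <- iota 1 k.-1].
Definition bases i k := (gadget i).1 :: (gadget i).2 :: rows k.

Lemma size_rows_gen m s : size (flatten [seq [:: Cpos r; Npos r] | r <- iota s m]) = 2 * m.
Proof. elim: m s => [|m IH] s //=. by rewrite IH mulnS. Qed.

Lemma size_rows k : size (rows k) = 2 * k.-1.
Proof. exact: size_rows_gen. Qed.

Lemma mem_rows k r b : 1 <= r <= k.-1 -> b \in [:: Cpos r; Npos r] -> b \in rows k.
Proof.
move=> hr hb; apply/flattenP; exists [:: Cpos r; Npos r] => //.
apply: map_f; rewrite mem_iota; lia.
Qed.

Lemma fin_cover i k d : dcheck i -> gcheck i -> 1 <= k -> 0 < d -> d < 14*k - 1 ->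
  exists b a p q, [/\ b \in bases i k, a \in Darcs i, nth None b a.1 = Some p,
     nth None b a.2 = Some q & (q = p + d \/ p = q + (14*k - 1 - d))].
Proof.
move=> /and4P[_ _ _ /allP Ho] /and4P[/allP Hg _ _ _] k1 d0 dn.
have [h|[h|[r [j [hr hj Hs]]]]] := classify k1 d0 dn.
- have hd : d \in iota 1 6 by rewrite mem_iota; lia.
  have /andP[/hasP[b Hb /hasP[a Ha Hst]] _] := Hg d hd.
  have [p [q [E1 E2 E3]]] := stepP_ex Hst.
  exists b, a, p, q; split => //; last by left.
  by move: Hb; rewrite !inE => /orP[->|->]; rewrite ?orbT.
- have hd : 14*k - 1 - d \in iota 1 6 by rewrite mem_iota; lia.
  have /andP[_ /hasP[b Hb /hasP[a Ha Hst]]] := Hg _ hd.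
  have [p [q [E1 E2 E3]]] := stepP_ex Hst.
  exists b, a, p, q; split => //; last by right.
  by move: Hb; rewrite !inE => /orP[->|->]; rewrite ?orbT.
- have r1 : 1 <= r by case/andP: hr.
  have hj' : j \in iota 0 7 by rewrite mem_iota; lia.
  have Hoj := Ho j hj'.
  case: Hs => Hs.
    have [b [a [Hb Ha Hst]]] := rowedge true r1 hj Hoj.
    have [p [q [E1 E2 E3]]] := stepP_ex Hst.
    exists b, a, p, q; split => //; last by left; rewrite E3 Hs.
    by rewrite /bases !inE (mem_rows hr Hb) !orbT.
  have [b [a [Hb Ha Hst]]] := rowedge false r1 hj Hoj.
  have [p [q [E1 E2 E3]]] := stepP_ex Hst.
  exists b, a, p, q; split => //; last by right; rewrite E3 Hs.
  by rewrite /bases !inE (mem_rows hr Hb) !orbT.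
Qed.

Lemma uC r : 1 <= r -> uniq (Cpos r).
Proof. move=> h; rewrite (map_inj_uniq (@Some_inj _)) /= !inE !negb_or; repeat (apply/andP; split); try done; apply/eqP; lia. Qed.
Lemma uN r : 1 <= r -> uniq (Npos r).
Proof. move=> h; rewrite (map_inj_uniq (@Some_inj _)) /= !inE !negb_or; repeat (apply/andP; split); try done; apply/eqP; lia. Qed.
Lemma bC r : 1 <= r -> bounded (14*r+4) (Cpos r).
Proof. move=> h; rewrite /bounded all_map /=; repeat (apply/andP; split); try done; lia. Qed.
Lemma bN r : 1 <= r -> bounded (14*r+4) (Npos r).
Proof. move=> h; rewrite /bounded all_map /=; repeat (apply/andP; split); try done; lia. Qed.

Lemma main_k i k : 1 <= i <= 8 -> 1 <= k ->
  exists B : seq {ffun 'I_7 -> 'I_(14*k-1).+1}, is_Ddecomposition i B.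
Proof.
move=> hi k1; have /andP[Hd Hg] := checkP hi.
set n := 14*k - 1.
have n0 : 13 <= n by rewrite /n; lia.
have Hd' := Hd; have Hg' := Hg.
move: Hd' Hg' => /and4P[Du Dall /eqP Dsz _] /and4P[_ Hout Hin /and5P[sX sY uX uY /andP[bX bY]]].
apply: (@develop i n (bases i k)) => //.
- by apply: leq_trans n0.
- move=> b t; rewrite /bases !inE => /orP[/eqP->|/orP[/eqP->|]].
  + by apply: (@cpy_inj n _ t 12) => //; exact: (eqP sX).
  + by apply: (@cpy_inj n _ t 12) => //; exact: (eqP sY).
  + case/flattenP => s /mapP[r Hr ->]; rewrite mem_iota in Hr.
    have r1 : 1 <= r by case/andP: Hr.
    have rn : 14*r+4 < n by rewrite /n; lia.
    rewrite !inE => /orP[/eqP->|/eqP->].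
    * exact: (@cpy_inj n (Cpos r) t (14*r+4) (erefl _) (uC r1) rn (bC r1)).
    * exact: (@cpy_inj n (Npos r) t (14*r+4) (erefl _) (uN r1) rn (bN r1)).
- by rewrite /= size_rows /n; lia.
move=> x y Hxy.
have n1 : 0 < n by apply: leq_trans n0.
have xn := ltn_ord x; have yn := ltn_ord y.
have trS p t z : (p + t) %% n = val z -> tr n (Some p) t = z.
  move=> E; apply: ord_inj; rewrite /= inordK; first exact: E.
  by rewrite ltnS ltnW // ltn_pmod.
have trN t z : val z = n -> tr n None t = z.
  by move=> E; apply: ord_inj; rewrite /= inordK ?E.
have isn (z : 'I_n.+1) : n <= z -> val z = n.
  by move=> h; apply/eqP; rewrite eqn_leq h -ltnS ltn_ord.
case: (ltnP x n) => hx; case: (ltnP y n) => hy.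
- have d0 := d_range hx hy Hxy.
  have dn : (y + n - x) %% n < n by rewrite ltn_pmod.
  have [b [a [p [q [Hb Ha E1 E2 Hpq]]]]] := fin_cover Hd Hg k1 d0 dn.
  have H1 := tr_hit p n1 hx.
  exists b, ((x + (n - p %% n)) %% n), a; split => //.
  + by rewrite ltn_pmod.
  + by rewrite E1; apply: trS; exact: H1.
  + by rewrite E2; apply: trS; apply: (tr_hit2 n1 hx hy Hpq).
- case/hasP: Hout => a Ha /andP[]; case E1: (nth None _ a.1) => [p|] // _ /eqP E2.
  exists (gadget i).1, ((x + (n - p %% n)) %% n), a; split => //.
  + by rewrite inE eqxx.
  + by rewrite ltn_pmod.
  + by rewrite E1; apply: trS; exact: tr_hit.
  + by rewrite E2; apply: trN; exact: isn.
- case/hasP: Hin => a Ha /andP[/eqP E1]; case E2: (nth None _ a.2) => [q|] // _.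
  exists (gadget i).1, ((y + (n - q %% n)) %% n), a; split => //.
  + by rewrite inE eqxx.
  + by rewrite ltn_pmod.
  + by rewrite E1; apply: trN; exact: isn.
  + by rewrite E2; apply: trS; exact: tr_hit.
- by case/eqP: Hxy; apply: ord_inj; rewrite (isn x hx) (isn y hy).
Qed.

Theorem lemma3p2 (i : nat) (hi : 1 <= i <= 8) (v : nat) (hv : 0 < v)
  (h14 : v %% 14 = 0) :
  exists B : seq {ffun 'I_7 -> 'I_v}, is_Ddecomposition i B.
Proof.
have k1 : 1 <= v %/ 14 by lia.
have -> : v = (14 * (v %/ 14) - 1).+1 by lia.
exact: main_k.
Qed.
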